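(* Let $F$ be a field, $A$ a finitely generated free abelian group and $F * A$ a twisted group algebra of $A$ over $F$. Then $F * A$ has center exactly $F$ if and only if for every subgroup $A_1 \le A$ of finite index in $A$ the twisted group algebra $F * A_1$ has center $F$.
   Context: A twisted group algebra $F * A$ of a finitely generated free abelian group $A$ over a field $F$ is an associative $F$-algebra with an $F$-basis $\{\bar a : a \in A\}$ (a copy of $A$) such that $\bar a_1 \bar a_2 = \tau(a_1,a_2)\overline{a_1a_2}$ for all $a_1,a_2\in A$, where $\tau : A\times A \to F\setminus\{0\}$ satisfies $\tau(a_1,a_2)\tau(a_1a_2,a_3)=\tau(a_2,a_3)\tau(a_1,a_2a_3)$. For a subgroup $B \le A$, $F * B$ denotes the subalgebra of $F * A$ spanned by $\{\bar b : b \in B\}$; it is a twisted group algebra of $B$. *)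

(* Defs.v *)
From HB Require Import structures.
From mathcomp Require Import all_boot all_order all_algebra.
From mathcomp Require Import finmap.
Set Implicit Arguments. Unset Strict Implicit. Unset Printing Implicit Defensive.
Import Order.TTheory GRing.Theory Num.Theory.
Local Open Scope ring_scope.

(* The finitely generated free abelian group A is Z^n, written additively as
   row vectors 'rV[int]_n.  The basis element \bar a of F*A is the
   indicator of a; a general element of F*A is a finitely supported
   function A -> F, i.e. an element of {fsfun A -> F with 0}. *)
Notation zgrp n := 'rV[int]_n.
Notation tga F n := {fsfun zgrp n -> F with 0}.

Definition twisting (F : fieldType) (n : nat) (tau : zgrp n -> zgrp n -> F) :=
  (forall a b, tau a b != 0) /\
  (forall a1 a2 a3,
     tau a1 a2 * tau (a1 + a2) a3 = tau a2 a3 * tau a1 (a2 + a3)).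

(* Multiplication of F*A:  (sum x_a \bar a)(sum y_b \bar b)
   = sum_{a,b} x_a y_b tau(a,b) \bar{a+b}; returned as a function A -> F
   (coefficient of \bar c). *)
Definition tga_mul (F : fieldType) (n : nat) (tau : zgrp n -> zgrp n -> F)
  (x y : tga F n) : zgrp n -> F :=
  fun c => \sum_(a <- finsupp x) \sum_(b <- finsupp y | a + b == c)
             x a * y b * tau a b.

Definition is_subgroup (n : nat) (B : {pred zgrp n}) :=
  (0 \in B) /\ (forall a b, a \in B -> b \in B -> a - b \in B).

Definition finite_index (n : nat) (B : {pred zgrp n}) :=
  exists s : seq (zgrp n), forall a, exists2 r, r \in s & a - r \in B.

Definition in_tga_sub (F : fieldType) (n : nat) (B : {pred zgrp n})
  (x : tga F n) := forall a, a \notin B -> x a = 0.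

(* Z(F*B) = F: an element of F*B is central in F*B iff it lies in
   F = F . 1 = F . \bar 0  (the unit of F*B is tau(0,0)^{-1} \bar 0),
   i.e. iff it is supported on {0}. *)
Definition center_is_F (F : fieldType) (n : nat) (tau : zgrp n -> zgrp n -> F)
  (B : {pred zgrp n}) :=
  forall x : tga F n, in_tga_sub B x ->
    ((forall y : tga F n, in_tga_sub B y -> tga_mul tau x y =1 tga_mul tau y x)
     <-> (forall a, a != 0 -> x a = 0)).

(* Main.v *)
Require Import Defs.
From HB Require Import structures.
From mathcomp Require Import all_boot all_order all_algebra.
From mathcomp Require Import finmap ring.
Set Implicit Arguments. Unset Strict Implicit.
Import GRing.Theory Num.Theory.
Local Open Scope ring_scope.
Section S.
Variables (F : fieldType) (n : nat) (tau : zgrp n -> zgrp n -> F).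
Hypothesis Ht : twisting tau.
Definition lam a b := tau a b / tau b a.
Lemma tnz a b : tau a b != 0. Proof. by case: Ht. Qed.
Lemma lamD a1 a2 b : lam (a1 + a2) b = lam a1 b * lam a2 b.
Proof.
case: Ht => nz C.
have E1 := C a1 a2 b. have E2 := C b a1 a2. have E3 := C a1 b a2.
rewrite [b + a1]addrC in E2. rewrite [b + a2]addrC in E3.
have eP : tau (a1 + a2) b = tau a2 b * tau a1 (a2 + b) / tau a1 a2.
  by apply: (mulfI (nz a1 a2)); rewrite E1; field; rewrite nz.
have eQ : tau b (a1 + a2) = tau b a1 * tau (a1 + b) a2 / tau a1 a2.
  by apply: (mulfI (nz a1 a2)); rewrite -E2; field; rewrite nz.
have eR : tau a1 (a2 + b) = tau a1 b * tau (a1 + b) a2 / tau b a2.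
  by apply: (mulfI (nz b a2)); rewrite -E3; field; rewrite nz.
rewrite /lam eP eQ eR; field.
by rewrite !nz.
Qed.
Lemma tau0 b : tau 0 b = tau b 0.
Proof.
case: Ht => nz C.
have E1 := C 0 0 b. have E2 := C b 0 0.
rewrite !add0r in E1; rewrite !addr0 in E2.
have h1 : tau 0 b = tau 0 0 by apply: (mulIf (nz 0 b)); rewrite E1 mulrC.
have h2 : tau b 0 = tau 0 0 by apply: (mulfI (nz b 0)); rewrite E2 mulrC.
by rewrite h1 h2.
Qed.
Lemma lam0 b : lam 0 b = 1.
Proof. by rewrite /lam tau0 divff // tnz. Qed.
Lemma lamMn a b k : lam (a *+ k) b = lam a b ^+ k.
Proof.
elim: k => [|k IH]; first by rewrite mulr0n lam0 expr0.
by rewrite mulrS lamD IH exprS.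
Qed.
Lemma lamV a b : lam a b = (lam b a)^-1.
Proof. by rewrite /lam invf_div. Qed.
Lemma lamnM a b k : lam a (b *+ k) = lam a b ^+ k.
Proof. by rewrite lamV lamMn -exprVn -lamV. Qed.
Lemma lam1 a b : (lam a b == 1) = (tau a b == tau b a).
Proof.
apply/idP/idP => /eqP h; apply/eqP.
  by move: h; rewrite /lam => /(congr1 (fun z => z * tau b a)); rewrite mulfVK ?tnz // mul1r.
by rewrite /lam h divff // tnz.
Qed.

Lemma sum_single (T : eqType) (G : T -> F) r c : uniq r ->
  (forall i, i != c -> G i = 0) -> (c \notin r -> G c = 0) ->
  \sum_(i <- r) G i = G c.
Proof.
move=> ur Gz Gc; case: (boolP (c \in r)) => cr.
  rewrite (big_rem c) //= big1_seq ?addr0 // => i /andP[_ ir]; apply: Gz.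
  by apply: contraTneq ir => ->; rewrite mem_rem_uniqF.
rewrite big1_seq ?Gc // => i /andP[_ ir]; apply: Gz.
by apply: contraNneq cr => <-.
Qed.

Lemma fsz (y : tga F n) k : k \notin finsupp y -> y k = 0.
Proof. by rewrite mem_finsupp negbK => /eqP. Qed.

Lemma addeq (a i d : zgrp n) : (a + i == d) = (i == d - a).
Proof.
apply/idP/idP => /eqP E; first by rewrite -E addrC addKr.
by rewrite E addrC subrK.
Qed.

Lemma mulE1 (x y : tga F n) d : tga_mul tau x y d =
  \sum_(a <- finsupp x) x a * y (d - a) * tau a (d - a).
Proof.
rewrite /tga_mul; apply: eq_bigr => a _.
rewrite big_mkcond /= (sum_single (c := d - a)) ?fset_uniq //.
- by rewrite addeq eqxx.
- by move=> i; rewrite addeq => /negPf ->.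
by move=> /fsz ->; rewrite ?mulr0 ?mul0r if_same.
Qed.

Lemma mulE2 (x y : tga F n) d : tga_mul tau x y d =
  \sum_(b <- finsupp y) x (d - b) * y b * tau (d - b) b.
Proof.
rewrite /tga_mul (exchange_big_dep xpredT) //=; apply: eq_bigr => b _.
rewrite big_mkcond /= (sum_single (c := d - b)) ?fset_uniq //.
- by rewrite [_ + b]addrC addeq eqxx.
- by move=> i; rewrite [i + b]addrC addeq => /negPf ->.
by move=> /fsz ->; rewrite ?mulr0 ?mul0r if_same.
Qed.
Lemma comm_single (x y : tga F n) c : (forall a, x a != 0 -> a = c) ->
  (forall e, y e != 0 -> tau c e = tau e c) -> tga_mul tau x y =1 tga_mul tau y x.
Proof.
move=> Hx Hy d; rewrite mulE1 mulE2; apply: eq_big_seq => a ax.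
have -> : a = c by apply: Hx; rewrite mem_finsupp in ax.
case: (eqVneq (y (d - c)) 0) => [->|ny]; first by rewrite !mulr0 !mul0r.
by rewrite Hy // (mulrC (x c)).
Qed.

Definition single (c : zgrp n) : tga F n :=
  [fsfun x in [fset c]%fset => (1:F) | 0].
Lemma singleE (c x : zgrp n) : single c x = if x == c then 1 else 0.
Proof. by rewrite /single fsfunE inE. Qed.

Lemma subeq (a b i : zgrp n) : (a + b - i == b) = (i == a).
Proof. by rewrite subr_eq [a + b]addrC (inj_eq (addrI b)) eq_sym. Qed.

Lemma extract (B : {pred zgrp n}) (x : tga F n) a b :
  (forall y : tga F n, in_tga_sub B y -> tga_mul tau x y =1 tga_mul tau y x) ->
  b \in B -> x a != 0 -> tau a b = tau b a.
Proof.
move=> H bB xa.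
have hs : in_tga_sub B (single b).
  by move=> d dB; rewrite singleE; case: eqP => // E; rewrite E bB in dB.
have := H (single b) hs (a + b).
rewrite mulE1 mulE2.
have e1 : \sum_(i <- finsupp x) x i * single b (a + b - i) * tau i (a + b - i)
   = x a * single b (a + b - a) * tau a (a + b - a).
  apply: sum_single; first exact: fset_uniq.
    by move=> i ia; rewrite singleE subeq (negPf ia) mulr0 mul0r.
  by rewrite mem_finsupp xa.
have e2 : \sum_(i <- finsupp x) single b (a + b - i) * x i * tau (a + b - i) i
   = single b (a + b - a) * x a * tau (a + b - a) a.
  apply: sum_single; first exact: fset_uniq.
    by move=> i ia; rewrite singleE subeq (negPf ia) !mul0r.
  by rewrite mem_finsupp xa.
rewrite e1 e2 !singleE subeq eqxx [a + b]addrC addrK mulr1 mul1r.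
by move/(mulfI xa).
Qed.
Lemma pigeon (B : {pred zgrp n}) : is_subgroup B -> finite_index B ->
  exists N, (0 < N)%N /\ forall b, exists2 k, (0 < k <= N)%N & b *+ k \in B.
Proof.
move=> [B0 BB] [s Hs].
have sp : (0 < size s)%N.
  by case: (Hs 0) => r; case: s {Hs}.
exists (size s); split => // b.
pose P i := fun r => b *+ i - r \in B.
have hasi : forall i, has (P i) s.
  by move=> i; case: (Hs (b *+ i)) => r rs rB; apply/hasP; exists r.
have ltf : forall i, (find (P i) s < size s)%N by move=> i; rewrite -has_find.
pose f := fun i : 'I_(size s).+1 => Ordinal (ltf i).
have key : forall i j : 'I_(size s).+1, (i < j)%N -> f i = f j ->
    exists2 k, (0 < k <= size s)%N & b *+ k \in B.
  move=> i j ij /(congr1 val) /= fij.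
  exists (j - i)%N.
    by apply/andP; split; [rewrite subn_gt0 | apply: leq_trans (leq_subr _ _) _; rewrite -ltnS].
  have hi := nth_find 0 (hasi i). have hj := nth_find 0 (hasi j).
  rewrite -fij in hj.
  have := BB _ _ hj hi.
  by rewrite opprB addrA subrK -mulrnBr // ltnW.
have : ~~ injectiveb f.
  apply/injectiveP => inj; have := leq_card f inj; by rewrite !card_ord ltnn.
move/injectivePn => [i [j ij fij]].
case: (ltngtP i j) => h; first exact: key h fij.
  exact: key h (esym fij).
by move/val_inj: h ij => ->; rewrite eqxx.
Qed.
End S.

Unset Implicit Arguments.
Theorem proposition2p1 (F : fieldType) (n : nat)
  (tau : 'rV[int]_n -> 'rV[int]_n -> F) :
  twisting tau ->
  (center_is_F tau (fun _ => true) <->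
   (forall A1 : {pred 'rV[int]_n}, is_subgroup A1 -> finite_index A1 ->
      center_is_F tau A1)).
Proof.
move=> Ht; split; last first.
  move=> H; apply: H; first by split => [|a b _ _]; exact: isT.
  by rewrite /finite_index; exists [:: 0] => a; exists 0; [exact: mem_head | exact: isT].
move=> HA A1 [B0 BB] Hfi x xA1; split.
  move=> Hc a a0; case: (eqVneq (x a) 0) => // xa; exfalso.
  have comm : forall b, b \in A1 -> lam tau a b = 1.
    by move=> b bB; apply/eqP; rewrite lam1 //; apply/eqP; exact: extract Hc bB xa.
  have [N [N0 HN]] := pigeon (conj B0 BB) Hfi.
  pose c := a *+ N`!.
  have cc : forall e, tau c e = tau e c.
    move=> e; apply/eqP; rewrite -lam1 // lamMn //.
    have [k /andP[k0 kN] kB] := HN e.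
    have := comm _ kB; rewrite lamnM // => hk.
    have /dvdnP [q ->] : (k %| N`!)%N by apply: dvdn_fact; rewrite k0 kN.
    by rewrite mulnC exprM hk expr1n.
  have c0 : c != 0.
    apply: contra a0 => /eqP cz; apply/eqP/rowP => j.
    have := congr1 (fun m : 'rV[int]_n => m ord0 j) cz.
    rewrite /= mulmxnE !mxE => /eqP; rewrite mulrn_eq0 => /orP [/eqP f0|/eqP -> //].
    by move: (fact_gt0 N); rewrite f0.
  have hs : in_tga_sub xpredT (single F c).
    by move=> d dn; exfalso; move/negP: dn; apply; exact: isT.
  have [H1 _] := HA (single F c) hs.
  have hcomm : forall y : tga F n, in_tga_sub xpredT y ->
      tga_mul tau (single F c) y =1 tga_mul tau y (single F c).
    move=> y _; apply: (comm_single (c := c)) => //.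
    by move=> a1; rewrite singleE; case: ifP => [/eqP //|_]; rewrite eqxx.
  have := H1 hcomm c c0.
  by rewrite singleE eqxx => /eqP; rewrite oner_eq0.
move=> Hs y yA1; apply: (comm_single (c := 0)) => //.
  by move=> b xb; case: (eqVneq b 0) => // b0; move: xb; rewrite Hs // eqxx.
by move=> e _; exact: tau0.
Qed.
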